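(* Let $n\ge5$, let $\Delta$ be a triangulation of the punctured $n$-gon $\mathcal{P}_n$ with quiver $Q_\Delta$, and let $\alpha\in\Delta$ be a diagonal which is not close to the border and which is not a diagonal between the puncture and the border. Then the quiver obtained from $Q_\Delta$ by factoring out the vertex $v_\alpha$ is disconnected.
   Context: $\mathcal{P}_n$ is a regular $n$-gon with one puncture in its center. For border vertices $a \neq b$, $\delta_{a,b}$ is the counterclockwise border path from $a$ to $b$ and $|\delta_{a,b}|$ the number of border vertices on it (including $a,b$); $\delta_{a,a}$ goes once around. A diagonal is an edge (homotopy class of non-self-crossing interior paths from $a$ to $b$ homotopic to $\delta_{a,b}$, with $|\delta_{a,b}|\ge3$) together with a tag $\epsilon\in\{\pm1\}$, with $\epsilon=1$ forced if $a\ne b$; edges with $a=b$ are drawn as arcs from the puncture to $a$ and called diagonals between the puncture and the border. Two puncture diagonals at $a,c$ with tags $\epsilon,\epsilon'$ cross iff $a\ne c$ and $\epsilon\ne\epsilon'$; otherwise crossing means intersecting in the interior for all representatives. A triangulation is a maximal set of pairwise non-crossing diagonals. A diagonal from $a$ to $b$, $a\ne b$, is close to the border if $|\delta_{a,b}|=3$. The quiver $Q_\Delta$ has a vertex $v_\beta$ for each $\beta\in\Delta$, an arrow between $v_\beta,v_\gamma$ when $\beta,\gamma$ bound a common triangle, oriented $v_\beta\to v_\gamma$ if $\gamma$ is obtained from $\beta$ by anticlockwise rotation about their common vertex (two diagonals from the puncture to the same vertex are treated as loops around the puncture, giving separate triangles), and with oriented $2$-cycles deleted. Factoring out a vertex means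 deleting it and all arrows incident to it. *)

(* Defs.v *)
From mathcomp Require Import all_boot.
Set Implicit Arguments. Unset Strict Implicit. Unset Printing Implicit Defensive.

(* Border vertices are 'I_n, numbered counterclockwise.
   A diagonal is either
   - inl (a, b): an edge from a to b, a <> b, in the homotopy class of the
     counterclockwise border path delta_{a,b} (tag forced to be +1), or
   - inr (a, eps): a diagonal between the puncture and the border vertex a
     (edge from a to a), with tag eps (true = +1, false = -1). *)
Definition diag (n : nat) := ('I_n * 'I_n + 'I_n * bool)%type.

Definition cdist n (a b : 'I_n) : nat := (b + n - a) %% n.

(* |delta_{a,b}| = number of border vertices on delta_{a,b}, for a <> b *)
Definition border_len n (a b : 'I_n) : nat := (cdist a b).+1.

Definition valid_diag n (d : diag n) : bool :=
  match d with
  | inl (a, b) => (a != b) && (3 <= border_len a b)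
  | inr _ => true
  end.

Definition is_puncture_diag n (d : diag n) : bool :=
  if d is inr _ then true else false.

Definition close_to_border n (d : diag n) : bool :=
  match d with
  | inl (a, b) => (a != b) && (border_len a b == 3)
  | inr _ => false
  end.

Definition strictly_inside n (a b c : 'I_n) : bool :=
  (0 < cdist a c) && (cdist a c < cdist a b).

(* Otherwise: intersection in the interior for all
   representatives, computed in the universal cover (upper half-plane,
   border = integer line, puncture at infinity): the edge (a,b) lifts to the
   chords [a + m n, a + cdist a b + m n]; a puncture diagonal at c lifts to
   vertical rays at c + m n.  Shifting so that a sits at 0, with
   t = cdist a c, k = cdist a b, l = cdist c d, two chords cross iff
   0 < t < k < t + l  (shift m = 0) or  n < t + l < n + k  (shift m = -1);
   no other shift can give a crossing since t, k, l < n. *)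
Definition cross n (d e : diag n) : bool :=
  match d, e with
  | inr (a, ea), inr (c, ec) => (a != c) && (ea != ec)
  | inl (a, b), inr (c, _) => strictly_inside a b c
  | inr (c, _), inl (a, b) => strictly_inside a b c
  | inl (a, b), inl (c, d) =>
      let t := cdist a c in let k := cdist a b in let l := cdist c d in
      ((0 < t) && (t < k) && (k < t + l)) || ((n < t + l) && (t + l < n + k))
  end.

Definition triangulation n (D : {set diag n}) : Prop :=
  [/\ (forall d, d \in D -> valid_diag d),
      (forall d e, d \in D -> e \in D -> ~~ cross d e)
    & (forall d, valid_diag d -> d \notin D -> exists2 e, e \in D & cross d e)].

(* Position of a diagonal in the counterclockwise order of the sides at the
   border vertex a (from the border edge towards a+1, rank 0, to the border
   edge towards a-1, rank 2n-1): edges (a, a+k) have rank k-1, puncture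
   diagonals at a have rank n-1, edges (a-k, a) have rank n-1+(n-k). *)
Definition rank_at n (a : 'I_n) (d : diag n) : option nat :=
  match d with
  | inl (x, y) =>
      if x == a then Some (cdist x y).-1
      else if y == a then Some (n.-1 + (n - cdist x y))
      else None
  | inr (x, _) => if x == a then Some n.-1 else None
  end.

(* b and c are consecutive sides of D at the border vertex a, c following b
   counterclockwise: they bound a common triangle at the corner a, and c is
   obtained from b by anticlockwise rotation about a.  (Both puncture
   diagonals at a, when present, get the same rank: they are treated as two
   loops around the puncture, each bounding its own triangle with the
   neighbouring sides, and no arrow joins them.) *)
Definition corner_at n (D : {set diag n}) (a : 'I_n) (b c : diag n) : bool :=
  [&& b \in D, c \in D &
   match rank_at a b, rank_at a c with
   | Some r, Some s =>
       (r < s) && [forall e in D,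
                     if rank_at a e is Some t then ~~ ((r < t) && (t < s))
                     else true]
   | _, _ => false
   end].

(* b and c are puncture diagonals of D at distinct vertices, consecutive
   counterclockwise around the puncture: they bound a common triangle at the
   puncture, and c is obtained from b by anticlockwise rotation. *)
Definition corner_at_puncture n (D : {set diag n}) (b c : diag n) : bool :=
  match b, c with
  | inr (x, _), inr (y, _) =>
      [&& b \in D, c \in D, x != y &
       [forall e in D, if e is inr (z, _) then ~~ strictly_inside x y z
                       else true]]
  | _, _ => false
  end.

(* number of arrows v_b -> v_c before deleting oriented 2-cycles
   (one for each common triangle / corner) *)
Definition raw_arrows n (D : {set diag n}) (b c : diag n) : nat :=
  #|[set a : 'I_n | corner_at D a b c]| + corner_at_puncture D b c.

(* Q_Delta: number of arrows v_b -> v_c after deleting oriented 2-cycles *)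
Definition quiver_arrows n (D : {set diag n}) (b c : diag n) : nat :=
  raw_arrows D b c - raw_arrows D c b.

Definition factor_out_adj n (D : {set diag n}) (alpha : diag n) : rel (diag n) :=
  fun b c => [&& b \in D :\ alpha, c \in D :\ alpha &
              (0 < quiver_arrows D b c) || (0 < quiver_arrows D c b)].

Definition factor_out_disconnected n (D : {set diag n}) (alpha : diag n) : Prop :=
  exists b c, [/\ b \in D :\ alpha, c \in D :\ alpha &
                  ~~ connect (factor_out_adj D alpha) b c].

(* Main.v *)
Require Import Defs.
From mathcomp Require Import all_boot zify.
Set Implicit Arguments. Unset Strict Implicit.

Lemma cdistP n (x y : 'I_n) : [/\ x < n, y < n, cdist x y < n &
   (x + cdist x y = y \/ x + cdist x y = y + n)].
Proof.
rewrite /cdist; have hx := ltn_ord x; have hy := ltn_ord y; split => //.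
  by rewrite ltn_mod; lia.
case: (leqP x y) => H.
  have -> : y + n - x = (y - x) + n by lia.
  by rewrite modnDr modn_small; lia.
by rewrite modn_small; lia.
Qed.

Definition cdtag n (x y : 'I_n) := True.

Ltac addcd := repeat match goal with
  | H : context[cdist ?x ?y] |- _ =>
      lazymatch goal with _ : cdtag x y |- _ => fail | _ =>
        have : cdtag x y by []; move=> ?; have [? ? ? ?] := cdistP x y end
  | |- context[cdist ?x ?y] =>
      lazymatch goal with _ : cdtag x y |- _ => fail | _ =>
        have : cdtag x y by []; move=> ?; have [? ? ? ?] := cdistP x y end
  end.

Lemma test n (a x y : 'I_n) : 0 < cdist a x -> (cdist a x < 3) && (cdist x y == 2) || false -> cdist a y < 6.
Proof. move=> *. addcd. lia. Qed.

Definition inS n (a b : 'I_n) (e : diag n) :=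
  match e with inl (x, y) => strictly_inside a b x || strictly_inside a b y | inr _ => false end.

Lemma ordneq n (x y : 'I_n) : x != y -> nat_of_ord x <> nat_of_ord y.
Proof. by move=> /eqP H /ord_inj. Qed.

Ltac cds x y := let h := fresh "h" in have [? ? ? [] h] := cdistP x y.

Lemma shapeA n (a b x y : 'I_n) :
  3 <= cdist a b -> x != y -> ~~ cross (inl (a,b)) (inl (x,y)) -> inS a b (inl (x,y)) ->
  [/\ cdist a x < cdist a y, cdist a y <= cdist a b & cdist x y = cdist a y - cdist a x].
Proof.
rewrite /cross /inS /strictly_inside => k3 /ordneq xy c i.
cds a x; cds a y; cds x y; cds a b; split; lia.
Qed.

Lemma offinj n (a u w : 'I_n) : cdist a u = cdist a w -> u = w.
Proof. move=> H; apply: ord_inj; cds a u; cds a w; lia. Qed.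

Lemma L1 n (a b x y v : 'I_n) r :
  3 <= cdist a b -> x != y -> ~~ cross (inl (a,b)) (inl (x,y)) -> inS a b (inl (x,y)) ->
  inl (x,y) != inl (a,b) :> diag n ->
  ~ (0 < cdist a v < cdist a b) -> rank_at v (inl (x,y)) = Some r ->
  (v = a /\ r.+1 < cdist a b) \/ (v = b /\ n.-1 + (n - cdist a b) < r).
Proof.
move=> k3 xy c i ne nv.
have [h1 h2 h3] := shapeA k3 xy c i.
rewrite /rank_at; case: eqP => [xv|xv]; [|case: eqP => [yv|yv] //]; case=> <-.
- subst v. have xa : x = a by (apply: (@offinj n a); have [? ? ? [] ?] := cdistP a a; lia).
  subst x; left; split => //.
  have : y != b by apply: contra ne => /eqP ->.
  move/ordneq => yb. have [? ? ? [] ?] := cdistP a b; cds a y; lia.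
- subst v. have yb : y = b by (apply: (@offinj n a); lia).
  subst y; right; split => //.
  have : x != a by apply: contra ne => /eqP ->.
  move/ordneq => xa. cds a x; cds a b; lia.
Qed.

Lemma L2 n (a b : 'I_n) f v s :
  3 <= cdist a b -> valid_diag f -> ~~ cross (inl (a,b)) f -> ~~ inS a b f ->
  f != inl (a,b) -> rank_at v f = Some s ->
  ~ (0 < cdist a v < cdist a b) /\ (v = a -> (cdist a b).-1 < s) /\
  (v = b -> s < n.-1 + (n - cdist a b)).
Proof.
move=> k3; case: f => [[x y]|[c eps]] /= vf cf if_ ne; last first.
  case: eqP => // cv [<-]; subst v; move: cf; rewrite /strictly_inside => cf.
  split; first lia.
  by split => ?; subst; cds a b; lia.
have {}ne : ~ (nat_of_ord x = a /\ nat_of_ord y = b).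
  by move=> [/ord_inj ? /ord_inj ?]; subst; rewrite eqxx in ne.
move: vf if_; rewrite /border_len /strictly_inside => /andP[/ordneq xy _] if_.
have [? ? ? [] ?] := cdistP a a; try lia.
all: have := cdistP a b => -[? ? kn hb].
all: case: eqP => [xv|xv]; [|case: eqP => [yv|yv] //]; case=> <-; subst v.
- split; first lia. split => E; subst x.
  + have := cdistP a y => -[? ? ? hy]. clear cf. lia.
  + have := cdistP b y => -[? ? ? ?]. clear cf hb. lia.
- split; first lia. split => E; subst y.
  + have := cdistP x a => -[? ? ? ?]. clear cf hb. lia.
  + have := cdistP a x => -[? ? ? hx]. have := cdistP x b => -[? ? ? hxb]. clear cf. lia.
Qed.

Lemma between n (a b : 'I_n) e f v r s :
  3 <= cdist a b -> valid_diag e -> valid_diag f ->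
  ~~ cross (inl (a,b)) e -> ~~ cross (inl (a,b)) f ->
  e != inl (a,b) -> f != inl(a,b) ->
  inS a b e -> ~~ inS a b f ->
  rank_at v e = Some r -> rank_at v f = Some s ->
  exists2 t, rank_at v (inl (a,b)) = Some t & (r < t < s) || (s < t < r).
Proof.
move=> k3 ve vf ce cf ne nf ie if_ re rf.
have [nv [fa fb]] := L2 k3 vf cf if_ nf rf.
case: e ve ce ne ie re => [[x y]|//] /= /andP[xy _] ce ne ie re.
have ab : a != b.
  apply/eqP => E; subst; have [? ? ? [] ?] := cdistP b b; lia.
have [[va rr]|[vb rr]] := L1 k3 xy ce ie ne nv re; subst v.
- exists (cdist a b).-1; first by rewrite /rank_at eqxx.
  have := fa erefl; lia.
- exists (n.-1 + (n - cdist a b)); first by rewrite /rank_at eqxx (negbTE ab).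
  have := fb erefl; lia.
Qed.

Lemma no_corner n (D : {set diag n}) (a b : 'I_n) e f v :
  3 <= cdist a b -> inl (a,b) \in D ->
  (forall d e, d \in D -> e \in D -> ~~ cross d e) ->
  (forall d, d \in D -> valid_diag d) ->
  e \in D -> f \in D -> e != inl (a,b) -> f != inl(a,b) ->
  inS a b e -> ~~ inS a b f ->
  corner_at D v e f = false /\ corner_at D v f e = false.
Proof.
move=> k3 aD Dnc Dv eD fD ne nf ie if_.
have bt := @between n a b e f v _ _ k3 (Dv _ eD) (Dv _ fD) (Dnc _ _ aD eD) (Dnc _ _ aD fD) ne nf ie if_.
rewrite /corner_at eD fD /=.
case re: (rank_at v e) => [r|]; case rf: (rank_at v f) => [s|] //.
have [t ht /orP[/andP[h1 h2]|/andP[h1 h2]]] := bt _ _ re rf.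
- split; last by apply/negbTE; rewrite negb_and; apply/orP; left; rewrite -leqNgt; lia.
  apply/negbTE/negP => /andP[_ /forall_inP H]; have := H _ aD; rewrite ht.
  by rewrite h1 h2.
- split; first by apply/negbTE; rewrite negb_and; apply/orP; left; rewrite -leqNgt; lia.
  apply/negbTE/negP => /andP[_ /forall_inP H]; have := H _ aD; rewrite ht.
  by rewrite h1 h2.
Qed.

Lemma no_arrows n (D : {set diag n}) (a b : 'I_n) e f :
  3 <= cdist a b -> inl (a,b) \in D ->
  (forall d e, d \in D -> e \in D -> ~~ cross d e) ->
  (forall d, d \in D -> valid_diag d) ->
  e \in D -> f \in D -> e != inl (a,b) -> f != inl(a,b) ->
  inS a b e -> ~~ inS a b f ->
  raw_arrows D e f = 0 /\ raw_arrows D f e = 0.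
Proof.
move=> k3 aD Dnc Dv eD fD ne nf ie if_.
have nc v := @no_corner n D a b e f v k3 aD Dnc Dv eD fD ne nf ie if_.
have pe : corner_at_puncture D e f = false /\ corner_at_puncture D f e = false.
  by case: e ie {ne eD nc} => [[x y]|//] _; case: f {if_ nf fD} => [[? ?]|[? ?]].
case: pe => pe1 pe2; rewrite /raw_arrows pe1 pe2 !addn0.
split; apply/eqP; rewrite cards_eq0; apply/eqP/setP => v; rewrite !inE;
  by case: (nc v) => h1 h2; rewrite ?h1 ?h2.
Qed.

Lemma ex2 n (a : 'I_n) : 3 <= n -> exists w : 'I_n, cdist a w = 2.
Proof.
move=> n3; have ha := ltn_ord a.
case: (ltnP (a + 2) n) => h.
  exists (Ordinal h); have := cdistP a (Ordinal h) => /= -[]; lia.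
have h' : a + 2 - n < n by lia.
exists (Ordinal h'); have := cdistP a (Ordinal h') => /= -[]; lia.
Qed.

Lemma exist_in n (D : {set diag n}) (a b : 'I_n) :
  3 <= cdist a b -> triangulation D -> inl (a,b) \in D ->
  exists2 g, g \in D & inS a b g && (g != inl (a,b)).
Proof.
move=> k3 [Dv Dnc Dmax] aD.
have kn : cdist a b < n by have [] := cdistP a b.
have [w hw] := ex2 a (leq_trans k3 (ltnW kn)).
have vw : valid_diag (inl (a, w) : diag n).
  rewrite /= /border_len hw andbT; apply/eqP => E; subst.
  have [? ? ? [] ?] := cdistP w w; lia.
case: (boolP (inl (a,w) \in D)) => wD.
  exists (inl (a,w)) => //; apply/andP; split.
    by rewrite /= /strictly_inside hw; apply/orP; right; lia.
  apply/eqP => -[E]; subst; lia.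
have [g gD cg] := Dmax _ vw wD.
exists g => //; have ca := Dnc _ _ aD gD.
case: g gD cg ca => [[x y]|[c eps]] gD /=; rewrite /strictly_inside hw => cg ca.
- have := cdistP a x => -[? ? ? ?]; have := cdistP a y => -[? ? ? ?];
  have := cdistP x y => -[? ? ? ?]; have := cdistP a b => -[? ? ? ?].
  have [h1|h2] : cdist a x = 1 \/ cdist a y = 1 by lia.
  + apply/andP; split; first by apply/orP; left; lia.
    apply/eqP => -[E _]; subst x; have [? ? ? [] ?] := cdistP a a; lia.
  + apply/andP; split; first by apply/orP; right; lia.
    apply/eqP => -[_ E]; subst y; lia.
- lia.
Qed.

Lemma exist_out n (D : {set diag n}) (a b : 'I_n) :
  3 <= cdist a b -> triangulation D -> inl (a,b) \in D ->
  exists2 g, g \in D & ~~ inS a b g && (g != inl (a,b)).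
Proof.
move=> k3 [Dv Dnc Dmax] aD.
case: (boolP (inr (a,true) \in D)) => pD; first by exists (inr (a,true)).
have [g gD cg] := Dmax (inr (a,true)) isT pD.
exists g => //; have ca := Dnc _ _ aD gD.
case: g gD cg ca => [[x y]|[c eps]] gD //=; rewrite /strictly_inside => cg ca.
have := cdistP a x => -[? ? ? ?]; have := cdistP a y => -[? ? ? ?];
have := cdistP x y => -[? ? ? ?]; have := cdistP a b => -[? ? ? ?];
have := cdistP x a => -[? ? ? ?].
apply/andP; split; first lia.
apply/eqP => -[E _]; subst x; have [? ? ? [] ?] := cdistP a a; lia.
Qed.

Theorem lemma5p4 (n : nat) (D : {set diag n}) (alpha : diag n) :
  5 <= n -> triangulation D -> alpha \in D ->
  ~~ close_to_border alpha -> ~~ is_puncture_diag alpha ->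
  factor_out_disconnected D alpha.
Proof.
move=> n5 T; case: alpha => [[a b]|//] aD nc _.
have T' := T; case: T' => Dv Dnc _.
have k3 : 3 <= cdist a b.
  move: (Dv _ aD) nc; rewrite /= /border_len => /andP[ab h]; rewrite ab /=; lia.
have [g1 g1D /andP[i1 n1]] := exist_in k3 T aD.
have [g2 g2D /andP[i2 n2]] := exist_out k3 T aD.
exists g1, g2; split; rewrite ?in_setD1 ?n1 ?n2 //.
have cl : closed (factor_out_adj D (inl (a,b))) [pred z | inS a b z].
  move=> x y /and3P[]; rewrite !in_setD1 => /andP[nx xD] /andP[ny yD] ar; rewrite !inE.
  apply/idP/idP => h; apply/negPn/negP => h'.
  - have [r1 r2] := no_arrows k3 aD Dnc Dv xD yD nx ny h h'.
    by move: ar; rewrite /quiver_arrows r1 r2.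
  - have [r1 r2] := no_arrows k3 aD Dnc Dv yD xD ny nx h h'.
    by move: ar; rewrite /quiver_arrows r1 r2.
apply/negP => /(closed_connect cl); rewrite !inE i1 => E.
by rewrite -E in i2.
Qed.
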